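(* Let $G\in\mathcal{G}_{2n}$ with $F(G)=n-1$. Then $G\in\mathcal{K}^+_{n,n}$ if and only if $G$ contains an independent set of size $n$. If $G\notin\mathcal{K}^+_{n,n}$, then $G$ is a brick, and hence $G$ is $1$-extendable.
   Context: All graphs are finite and simple. $\mathcal{G}_{2n}$ denotes the set of all graphs with $2n$ vertices that have a perfect matching. For a perfect matching $M$ of $G$, a forcing set of $M$ is a subset $S\subseteq M$ contained in no other perfect matching of $G$; $f(G,M)$ is the minimum size of a forcing set of $M$, and $F(G)$ is the maximum of $f(G,M)$ over all perfect matchings $M$. $\mathcal{K}^+_{n,n}$ is the family of graphs obtained from the complete bipartite graph $K_{n,n}$ by adding arbitrary (possibly no) additional edges whose both ends lie in the same one of the two partite sets (all added edges within one fixed partite set). A graph is bicritical if it has an edge and $G-u-v$ has a perfect matching for every pair of distinct vertices $u,v$; a brick is a $3$-connected bicritical graph. A connected graph with at least $2l+2$ vertices is $l$-extendable if it has a perfect matching and every matching of size $l$ is contained in a perfect matching. *)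

(* Defs.v *)
From mathcomp Require Import all_boot.
Set Implicit Arguments. Unset Strict Implicit. Unset Printing Implicit Defensive.

Section Graphs.
Variable T : finType.
Variable e : rel T.

Definition simple_graph : Prop := symmetric e /\ irreflexive e.

Definition is_edge (E : {set T}) : bool :=
  [exists x, exists y, e x y && (E == [set x; y])].

(* M is a perfect matching of the subgraph induced by X *)
Definition matching_of (X : {set T}) (M : {set {set T}}) : bool :=
  [&& [forall E in M, is_edge E], trivIset M & cover M == X].

Definition perfect_matching (M : {set {set T}}) : bool := matching_of setT M.

Definition has_perfect_matching : Prop := exists M, perfect_matching M.

Definition forcing_set (M S : {set {set T}}) : bool :=
  (S \subset M) &&
  [forall M' : {set {set T}}, (perfect_matching M' && (S \subset M')) ==> (M' == M)].

(* f(G,M): minimum size of a forcing set of M (M itself is one) *)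
Definition forcing_number (M : {set {set T}}) : nat :=
  \big[minn/#|M|]_(S : {set {set T}} | forcing_set M S) #|S|.

Definition max_forcing_number : nat :=
  \max_(M : {set {set T}} | perfect_matching M) forcing_number M.

Definition independent (S : {set T}) : bool :=
  [forall x in S, forall y in S, ~~ e x y].

(* G belongs to K^+_{n,n}: there is a bipartition (A,B) with |A|=|B|=n,
   all A-B pairs adjacent, and no edges inside B (extra edges only inside A). *)
Definition in_Kplus (n : nat) : Prop :=
  exists A : {set T}, [/\ #|A| = n, #|~: A| = n,
    (forall a b, a \in A -> b \in ~: A -> e a b) &
    (forall b b', b \in ~: A -> b' \in ~: A -> ~~ e b b')].

Definition connected_on (X : {set T}) : Prop :=
  forall x y, x \in X -> y \in X ->
    connect [rel u v | [&& e u v, u \in X & v \in X]] x y.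

Definition connected : Prop := connected_on setT.

Definition k_connected (k : nat) : Prop :=
  k < #|T| /\ forall S : {set T}, #|S| < k -> connected_on (~: S).

Definition bicritical : Prop :=
  (exists x y, e x y) /\
  forall u v, u != v -> exists M, matching_of (~: [set u; v]) M.

Definition brick : Prop := k_connected 3 /\ bicritical.

Definition one_extendable : Prop :=
  [/\ connected, 4 <= #|T|, has_perfect_matching &
      forall E, is_edge E -> exists M, perfect_matching M /\ E \in M].

End Graphs.

(* Main.v *)
Require Import Defs.
From mathcomp Require Import all_boot zify.
Set Implicit Arguments. Unset Strict Implicit. Unset Printing Implicit Defensive.

Lemma bigmin_le_seq (I : eqType) (s : seq I) (P : pred I) (F : I -> nat) x i0 :
  i0 \in s -> P i0 -> \big[minn/x]_(i <- s | P i) F i <= F i0.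
Proof.
elim: s => //= i s IH; rewrite in_cons big_cons => /orP [/eqP <- ->|].
  exact: geq_minl.
move=> /IH H /H {}H; case: (P i) => //; exact: leq_trans (geq_minr _ _) H.
Qed.

Lemma bigmin_le (I : finType) (P : pred I) (F : I -> nat) x i0 :
  P i0 -> \big[minn/x]_(i | P i) F i <= F i0.
Proof. by move=> H; apply: bigmin_le_seq => //; rewrite mem_index_enum. Qed.

Section G.
Variable T : finType.
Variable e : rel T.
Hypothesis esym : symmetric e.
Hypothesis eirr : irreflexive e.

Definition invol (q : T -> T) := (forall t, q (q t) = t) /\ (forall t, q t != t).

Lemma set2_blk (q : T -> T) t z : (forall t, q (q t) = t) ->
  z \in [set t; q t] -> [set t; q t] = [set z; q z].
Proof.
move=> qK; rewrite !inE => /orP [/eqP -> // | /eqP ->]; by rewrite qK setUC.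
Qed.

Lemma matching_from_inv (X : {set T}) (q : T -> T) :
  invol q -> (forall t, t \in X -> q t \in X) -> (forall t, t \in X -> e t (q t)) ->
  matching_of e X [set [set t; q t] | t in X].
Proof.
move=> [qK qN] qX qE; apply/and3P; split.
- apply/forallP => E; apply/implyP => /imsetP [t tX ->]; rewrite /is_edge.
  by apply/existsP; exists t; apply/existsP; exists (q t); rewrite qE ?eqxx.
- apply/trivIsetP => A B /imsetP [t tX ->] /imsetP [s sX ->] neq.
  rewrite disjoint_subset; apply/subsetP => z zA; rewrite inE; apply/negP => zB.
  move/negP: neq; apply; by rewrite (set2_blk qK zA) (set2_blk qK zB).
- rewrite cover_imset; apply/eqP/setP => z; apply/bigcupP/idP.
    by case=> t tX; rewrite !inE => /orP [/eqP ->| /eqP ->] //; apply: qX.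
  by move=> zX; exists z => //; rewrite !inE eqxx.
Qed.

Definition swap (q : T -> T) x y t :=
  if t == x then y else if t == y then x else if t == q x then q y
  else if t == q y then q x else q t.

Lemma swap_inv q x y : invol q -> y != x -> y != q x -> invol (swap q x y).
Proof.
move=> [qK qN] yx yqx.
have qinj : injective q by exact: can_inj qK.
have h1 : q x != x by [].
have h2 : q y != y by [].
have h3 : q y != x by apply: contra yqx => /eqP <-; rewrite qK.
have h4 : q y != q x by rewrite (inj_eq qinj).
have h5 : q x != y by rewrite eq_sym.
split => t; rewrite /swap.
- case: (t =P x) => [->|tx]; first by rewrite (negbTE yx) eqxx.
  case: (t =P y) => [->|ty]; first by rewrite eqxx.
  case: (t =P q x) => [->|tqx]; first by rewrite (negbTE h3) (negbTE h2) (negbTE h4) eqxx.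
  case: (t =P q y) => [->|tqy]; first by rewrite (negbTE h1) (negbTE h5) eqxx.
  have a1 : q t != x by apply/eqP => E; apply: tqx; rewrite -E qK.
  have a2 : q t != y by apply/eqP => E; apply: tqy; rewrite -E qK.
  have a3 : q t != q x by rewrite (inj_eq qinj); apply/eqP.
  have a4 : q t != q y by rewrite (inj_eq qinj); apply/eqP.
  by rewrite (negbTE a1) (negbTE a2) (negbTE a3) (negbTE a4) qK.
- case: (t =P x) => [->|tx]; first exact: yx.
  case: (t =P y) => [->|ty]; first by rewrite /= eq_sym.
  case: (t =P q x) => [->|tqx]; first exact: h4.
  case: (t =P q y) => [->|tqy]; first by rewrite /= eq_sym.
  exact: qN.
Qed.

Lemma swap_x q x y : swap q x y x = y.
Proof. by rewrite /swap eqxx. Qed.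
Lemma swap_y q x y : y != x -> swap q x y y = x.
Proof. by move=> h; rewrite /swap (negbTE h) eqxx. Qed.
Lemma swap_qx q x y : q x != x -> q x != y -> swap q x y (q x) = q y.
Proof. by move=> h1 h2; rewrite /swap (negbTE h1) (negbTE h2) eqxx. Qed.
Lemma swap_qy q x y : q y != x -> q y != y -> q y != q x -> swap q x y (q y) = q x.
Proof. by move=> h1 h2 h3; rewrite /swap (negbTE h1) (negbTE h2) (negbTE h3) eqxx. Qed.
Lemma swap_o q x y t : t \notin [:: x; y; q x; q y] -> swap q x y t = q t.
Proof.
rewrite !in_cons in_nil !negb_or => /and5P [h1 h2 h3 h4 _].
by rewrite /swap (negbTE h1) (negbTE h2) (negbTE h3) (negbTE h4).
Qed.

End G.

Section G.
Variable T : finType.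
Variable e : rel T.
Hypothesis esym : symmetric e.
Hypothesis eirr : irreflexive e.

Definition pp (M : {set {set T}}) (x : T) :=
  odflt x [pick y | (y != x) && ([set x; y] \in M)].

Lemma pm_block M B : perfect_matching e M -> B \in M ->
  exists x y, [/\ e x y, x != y & B = [set x; y]].
Proof.
case/and3P => /forallP H _ _ BM; move: (H B); rewrite BM /= => /existsP [x /existsP [y /andP [exy /eqP ->]]].
exists x, y; split => //; apply/eqP => E; by rewrite E eirr in exy.
Qed.

Lemma pm_uniq M x y z : perfect_matching e M -> [set x; y] \in M -> [set x; z] \in M ->
  y != x -> y = z.
Proof.
case/and3P => _ /trivIsetP tM _ A B yx.
have: [set x; y] = [set x; z].
  apply/eqP; apply: contraT => /(tM _ _ A B); rewrite disjoint_subset => /subsetP /(_ x).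
  by rewrite !inE eqxx /= => /(_ isT).
move=> E; have : y \in [set x; z] by rewrite -E !inE eqxx orbT.
by rewrite !inE (negbTE yx) /= => /eqP.
Qed.

Lemma pp_spec M x : perfect_matching e M -> pp M x != x /\ [set x; pp M x] \in M.
Proof.
move=> pm; have := pm; case/and3P => _ _ /eqP cM.
have : x \in cover M by rewrite cM inE.
case/bigcupP => B BM xB.
have [y [yx yM]] : exists y, y != x /\ [set x; y] \in M.
  case: (pm_block pm BM) => a [b [_ ab EB]]; move: xB; rewrite EB !inE => /orP [] /eqP ->.
    by exists b; rewrite eq_sym ab -EB.
  by exists a; rewrite ab setUC -EB.
rewrite /pp; case: pickP => [z /andP [-> ->] //|/(_ y)]; by rewrite yx yM.
Qed.

Lemma pp_uniq M x y : perfect_matching e M -> y != x -> [set x; y] \in M -> y = pp M x.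
Proof. move=> pm yx yM; case: (pp_spec x pm) => _ H; exact: pm_uniq pm yM H yx. Qed.

Lemma pp_inv M : perfect_matching e M -> invol (pp M).
Proof.
move=> pm; split => x; last by case: (pp_spec x pm).
case: (pp_spec x pm) => h1 h2; symmetry; apply: pp_uniq => //; last by rewrite setUC.
by rewrite eq_sym.
Qed.

Lemma pp_blocks M B : perfect_matching e M -> B \in M -> exists x, B = [set x; pp M x].
Proof.
move=> pm BM; case: (pm_block pm BM) => a [b [_ ab EB]]; exists a.
have ba : b != a by rewrite eq_sym.
have abM : [set a; b] \in M by rewrite -EB.
by rewrite -(pp_uniq pm ba abM).
Qed.

Lemma pp_edge M x : perfect_matching e M -> e x (pp M x).
Proof.
move=> pm; case: (pp_spec x pm); move: (pp M x) => y h1 h2.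
case: (pm_block pm h2) => a [b [eab ab EB]].
have hx : x \in [set a; b] by rewrite -EB set21.
have hy : y \in [set a; b] by rewrite -EB set22.
rewrite !inE in hx hy.
move: h1; case/orP: hx => /eqP ->; case/orP: hy => /eqP ->.
- by rewrite eqxx.
- by [].
- by rewrite esym.
- by rewrite eqxx.
Qed.

Lemma pm_eq M M' : perfect_matching e M -> perfect_matching e M' ->
  (forall x, pp M x = pp M' x) -> M = M'.
Proof.
move=> pm pm' E; apply/setP => B; apply/idP/idP => BM.
  have [x Bx] := pp_blocks pm BM; rewrite Bx E; exact: (pp_spec x pm').2.
have [x Bx] := pp_blocks pm' BM; rewrite Bx -E; exact: (pp_spec x pm).2.
Qed.

Lemma pm_card M : perfect_matching e M -> 2 * #|M| = #|T|.
Proof.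
move=> pm; have := pm; case/and3P => _ tM /eqP cM.
move: tM; rewrite /trivIset cM cardsT => /eqP <-.
rewrite (eq_bigr (fun _ => 2)); first by rewrite sum_nat_const mulnC.
move=> B BM.
case: (pm_block pm BM) => a [b [_ ab ->]]; by rewrite cards2 ab.
Qed.

End G.

Lemma arith (n f s m k1 k2 t : nat) : n - 1 <= f -> f <= s -> s <= k2 ->
  m = true + k1 -> k1 = true + k2 -> 2 * m = t -> t = 2 * n -> False.
Proof. move=> *; lia. Qed.

Section G.
Variable T : finType.
Variable e : rel T.
Hypothesis esym : symmetric e.
Hypothesis eirr : irreflexive e.

Lemma pair_prop M n : perfect_matching e M -> #|T| = 2 * n -> n - 1 <= forcing_number e M ->
  forall a c, c \notin [:: a; pp M a] ->
  (e a c && e (pp M a) (pp M c)) || (e a (pp M c) && e (pp M a) c).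
Proof.
move=> pm cT fn a c hc; apply: contraT => hne.
have [pK pN] := pp_inv eirr pm.
set p := pp M in pK pN hc hne *.
have pinj : injective p by exact: can_inj pK.
move: hc; rewrite !inE negb_or => /andP [ca cpa].
have apa : p a != a by [].
have pcc : p c != c by [].
have pca : p c != a by apply: contra cpa => /eqP <-; rewrite pK.
have pcpa : p c != p a by rewrite (inj_eq pinj).
set sp := [:: a; p a; c; p c].
have spP : forall t, (p t \in sp) = (t \in sp).
  have peq : forall x y, (p x == y) = (x == p y) by move=> x y; rewrite -(inj_eq pinj) pK.
  move=> t; rewrite !inE !peq !pK.
  by case: (t == a); case: (t == p a); case: (t == c); case: (t == p c).
set S := [set B in M | (a \notin B) && (c \notin B)].
have fS : forcing_set e M S.
  apply/andP; split; first by apply/subsetP => B; rewrite inE => /andP [].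
  apply/forallP => M'; apply/implyP => /andP [pm' SM'].
  have [qK qN] := pp_inv eirr pm'.
  set q := pp M' in qK qN *.
  have F1 : forall t, t \notin sp -> q t = p t.
    move=> t; rewrite !inE !negb_or => /and4P [ta tpa tc tpc].
    have tS : [set t; p t] \in S.
      rewrite inE (pp_spec eirr t pm).2 !inE !negb_or /=.
      rewrite ![a == _]eq_sym ![c == _]eq_sym ta tc /=.
      apply/andP; split.
        by apply: contra tpa => /eqP <-; rewrite pK.
      by apply: contra tpc => /eqP <-; rewrite pK.
    have := subsetP SM' _ tS => tM'.
    by rewrite (pp_uniq eirr pm' (pN t) tM').
  have F2 : forall t, t \in sp -> q t \in sp.
    move=> t tsp; apply: contraT => hs.
    have E1 := F1 _ hs; rewrite qK in E1.
    have : p (q t) \in sp by rewrite -E1.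
    by rewrite spP (negbTE hs).
  have qinj : injective q by exact: can_inj qK.
  have Ea : q a = p a.
    have := F2 a; rewrite !inE eqxx /= => /(_ isT).
    case/or4P => /eqP E.
    - by move: (qN a); rewrite E eqxx.
    - by [].
    - have := F2 (p a); rewrite !inE eqxx orbT => /(_ isT).
      case/or4P => /eqP E2.
      + by have := qK (p a); rewrite E2 E => H; rewrite H eqxx in cpa.
      + by move: (qN (p a)); rewrite E2 eqxx.
      + by have := qK (p a); rewrite E2 -E qK => H; rewrite -H eqxx in apa.
      + have h1 := pp_edge esym eirr a pm'; have h2 := pp_edge esym eirr (p a) pm'.
        rewrite -/q E in h1; rewrite -/q E2 in h2.
        by move: hne; rewrite h1 h2.
    - have := F2 (p a); rewrite !inE eqxx orbT => /(_ isT).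
      case/or4P => /eqP E2.
      + by have := qK (p a); rewrite E2 E => H; rewrite H eqxx in pcpa.
      + by move: (qN (p a)); rewrite E2 eqxx.
      + have h1 := pp_edge esym eirr a pm'; have h2 := pp_edge esym eirr (p a) pm'.
        rewrite -/q E in h1; rewrite -/q E2 in h2.
        by move: hne; rewrite h1 h2 orbT.
      + by have := qK (p a); rewrite E2 -E qK => H; rewrite -H eqxx in apa.
  have Epa : q (p a) = p (p a) by rewrite pK -{1}Ea qK.
  have Ec : q c = p c.
    have hcs : c \in sp by rewrite !inE eqxx !orbT.
    have := F2 c hcs; rewrite !inE.
    case/or4P => /eqP E.
    - by have := qK c; rewrite E Ea => H; rewrite H eqxx in cpa.
    - by have := qK c; rewrite E Epa pK => H; rewrite H eqxx in ca.
    - by move: (qN c); rewrite E eqxx.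
    - by [].
  have Epc : q (p c) = p (p c) by rewrite pK -{1}Ec qK.
  have Eall : forall t, pp M t = pp M' t.
    move=> t; rewrite -/p -/q; case: (boolP (t \in sp)) => ht; last by rewrite F1.
    move: ht; rewrite !inE => /or4P [] /eqP ->; by [].
  by rewrite (pm_eq eirr pm pm' Eall).
have h1 : forcing_number e M <= #|S|.
  rewrite /forcing_number; exact: (@bigmin_le _ (fun S => forcing_set e M S) (fun S => #|S|) _ _ fS).
have Ma : [set a; p a] \in M by exact: (pp_spec eirr a pm).2.
have Mc : [set c; p c] \in M by exact: (pp_spec eirr c pm).2.
have Mne : [set c; p c] \in M :\ [set a; p a].
  rewrite !inE Mc andbT; apply/eqP => E.
  have : c \in [set a; p a] by rewrite -E set21.
  by rewrite !inE (negbTE ca) (negbTE cpa).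
have sub : S \subset (M :\ [set a; p a]) :\ [set c; p c].
  apply/subsetP => B; rewrite !inE => /and3P [BM aB cB]; rewrite BM andbT.
  apply/andP; split; apply/eqP => E; rewrite E !inE eqxx ?orbT // in aB cB.
have h2 := subset_leq_card sub.
have h3 := cardsD1 [set a; p a] M; rewrite Ma in h3.
have h4 := cardsD1 [set c; p c] (M :\ [set a; p a]); rewrite Mne in h4.
have h5 := pm_card eirr pm.
by case: (arith fn h1 h2 h3 h4 h5 cT).
Qed.

End G.

Section G.
Variable T : finType.
Variable e : rel T.
Hypothesis esym : symmetric e.
Hypothesis eirr : irreflexive e.
Variable p : T -> T.
Hypothesis pK : forall t, p (p t) = t.
Hypothesis pN : forall t, p t != t.
Hypothesis pE : forall t, e t (p t).
Hypothesis pair : forall a c, c \notin [:: a; p a] ->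
  (e a c && e (p a) (p c)) || (e a (p c) && e (p a) c).
Variable n : nat.
Hypothesis cT : #|T| = 2 * n.

Lemma pinj : injective p. Proof. exact: can_inj pK. Qed.

Lemma nb x y : y \notin [:: x; p x] -> e x y || e x (p y).
Proof. by move/pair => /orP [] /andP [-> _]; rewrite ?orbT. Qed.

Lemma imset_p (S : {set T}) t : (t \in p @: S) = (p t \in S).
Proof.
apply/imsetP/idP => [[s sS ->]|h]; first by rewrite pK.
by exists (p t); rewrite ?pK.
Qed.

Lemma half_count (S : {set T}) : (forall t, (p t \in S) = ~~ (t \in S)) -> #|S| = n.
Proof.
move=> H.
have E : p @: S = ~: S by apply/setP => t; rewrite imset_p inE H.
have h1 := card_imset S pinj; rewrite E in h1.
have h2 := cardsC S; lia.
Qed.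

Lemma cover_count (S : {set T}) : (forall t, t \in S -> p t \notin S) -> #|S| = n ->
  forall t, (t \in S) || (p t \in S).
Proof.
move=> H cS t.
have D : S :&: p @: S = set0.
  apply/setP => x; rewrite !inE imset_p; apply/negP => /andP [h1 h2].
  by move: (H x h1); rewrite h2.
have h1 := cardsU S (p @: S); rewrite D cards0 subn0 (card_imset S pinj) in h1.
have : S :|: p @: S == setT.
  by rewrite eqEcard subsetT cardsT h1 cS cT mul2n -addnn leqnn.
move/eqP/setP/(_ t); by rewrite !inE imset_p.
Qed.

Lemma Kplus_of_indep (S : {set T}) : independent e S -> #|S| = n -> in_Kplus e n.
Proof.
move=> /forallP ind cS.
have ind2 : forall x y, x \in S -> y \in S -> ~~ e x y.
  by move=> x y xS yS; move: (ind x); rewrite xS /= => /forallP /(_ y); rewrite yS.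
have H1 : forall t, t \in S -> p t \notin S.
  by move=> t tS; apply/negP => ptS; move: (ind2 _ _ tS ptS); rewrite pE.
have H2 := cover_count H1 cS.
exists (~: S); rewrite setCK; split => //.
- by have := cardsC S; lia.
- move=> a b; rewrite inE => aS bS.
  have paS : p a \in S by move: (H2 a); rewrite (negbTE aS).
  case: (b =P p a) => [-> //|bpa].
  have hb : b \notin [:: a; p a].
    rewrite !inE negb_or; apply/andP; split; last by apply/eqP.
    by apply/eqP => E; move: aS; rewrite -E bS.
  move: (pair hb) => /orP [/andP [-> _] //|/andP [_ h]].
  have bne : b != p a by apply/eqP.
  by move: (ind2 _ _ paS bS); rewrite h.
Qed.


Lemma pinvol : invol p. Proof. by split. Qed.

Lemma peq x y : (p x == y) = (x == p y).
Proof. by rewrite -(inj_eq pinj) pK. Qed.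

Section NI.
Hypothesis noind : forall S : {set T}, independent e S -> #|S| = n -> False.

Lemma noC u v : u != v -> v != p u ->
  ~~ e (p u) (p v) ->
  (forall z, z \notin [:: u; p u; v; p v] -> e (p u) z -> e (p z) (p v) -> False) ->
  (forall z w, z \notin [:: u; p u; v; p v] -> w \notin [:: u; p u; v; p v] ->
     w \notin [:: z; p z] -> e (p u) z -> e (p z) (p w) -> e w (p v) -> False) -> False.
Proof.
move=> uv vpu nA nB nC.
set sp := [:: u; p u; v; p v].
have spP : forall t, (p t \in sp) = (t \in sp).
  move=> t; rewrite !inE !peq !pK.
  by case: (t == u); case: (t == p u); case: (t == v); case: (t == p v).
have X1 : forall t, t \notin sp -> e (p u) t || e (p u) (p t).
  move=> t; rewrite !inE !negb_or => /and4P [h1 h2 h3 h4]; apply: nb.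
  by rewrite !inE pK negb_or h2 h1.
have X1' : forall t, t \notin sp -> e (p v) t || e (p v) (p t).
  move=> t; rewrite !inE !negb_or => /and4P [h1 h2 h3 h4]; apply: nb.
  by rewrite !inE pK negb_or h4 h3.
have X2 : forall t, t \notin sp -> ~~ (e (p u) t && e (p u) (p t)).
  move=> t ht; apply/negP => /andP [h1 h2].
  have hpt : p t \notin sp by rewrite spP.
  case/orP: (X1' t ht) => h3.
    by apply: (nB (p t) hpt h2); rewrite pK esym.
  by apply: (nB t ht h1); rewrite esym.
have X3 : forall t, t \notin sp -> e (p u) (p t) -> ~~ e (p v) t.
  move=> t ht h1; apply/negP => h2.
  have hpt : p t \notin sp by rewrite spP.
  by apply: (nB (p t) hpt h1); rewrite pK esym.
set S := [set t | [|| t == p u, t == p v | (t \notin sp) && e (p u) (p t)]].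
have memS : forall t, (t \in S) = [|| t == p u, t == p v | (t \notin sp) && e (p u) (p t)].
  by move=> t; rewrite inE.
have uS : u \notin S.
  rewrite inE !negb_or; apply/and3P; split.
  - by rewrite eq_sym pN.
  - by rewrite eq_sym peq.
  - by rewrite eqxx.
have vS : v \notin S.
  rewrite inE !negb_or; apply/and3P; split.
  - by [].
  - by rewrite eq_sym pN.
  - by rewrite eqxx /= ?andbF.
have puS : p u \in S by rewrite inE eqxx.
have pvS : p v \in S by rewrite inE eqxx orbT.
have SP : forall t, (p t \in S) = ~~ (t \in S).
  move=> t; case: (boolP (t \in sp)) => ht.
    have : [|| t == u, t == p u, t == v | t == p v] by move: ht; rewrite !inE.
    case/or4P => /eqP ->; rewrite ?pK.
    - by rewrite puS; move: uS; rewrite inE => /negbTE ->.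
    - by rewrite puS; move: uS; rewrite inE => /negbTE ->.
    - by rewrite pvS; move: vS; rewrite inE => /negbTE ->.
    - by rewrite pvS; move: vS; rewrite inE => /negbTE ->.
  have hpt : p t \notin sp by rewrite spP.
  have a1 : (p t == p u) = false.
    by apply/negbTE; apply: contra ht => /eqP /pinj ->; rewrite !inE eqxx.
  have a2 : (p t == p v) = false.
    by apply/negbTE; apply: contra ht => /eqP /pinj ->; rewrite !inE eqxx !orbT.
  have a3 : (t == p u) = false.
    by apply/negbTE; apply: contra ht => /eqP ->; rewrite !inE eqxx !orbT.
  have a4 : (t == p v) = false.
    by apply/negbTE; apply: contra ht => /eqP ->; rewrite !inE eqxx !orbT.
  rewrite !memS a1 a2 a3 a4 hpt ht /= pK.
  move: (X1 t ht) (X2 t ht).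
  by case: (e (p u) t); case: (e (p u) (p t)).
have cS : #|S| = n by apply: half_count.
apply: (noind (S := S)) => //.
have Smem : forall t, t \in S -> [\/ t = p u, t = p v | t \notin sp /\ e (p u) (p t)].
  move=> t; rewrite inE => /or3P [/eqP ->|/eqP ->|/andP [h1 h2]].
  - by constructor 1.
  - by constructor 2.
  - by constructor 3.
apply/forallP => x; apply/implyP => xS; apply/forallP => y; apply/implyP => yS.
case: (Smem x xS) => [->|->|[hx ex]]; case: (Smem y yS) => [->|->|[hy ey]].
- by rewrite eirr.
- exact: nA.
- by move: (X2 y hy); rewrite ey andbT.
- by rewrite esym.
- by rewrite eirr.
- exact: X3.
- by move: (X2 x hx); rewrite ex andbT esym.
- by rewrite esym; apply: X3.
- apply/negP => exy.
  have hpx : p x \notin sp by rewrite spP.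
  have hpy : p y \notin sp by rewrite spP.
  case: (x =P y) => [E|xy]; first by rewrite E eirr in exy.
  have hw : p y \notin [:: p x; p (p x)].
    rewrite !inE negb_or pK; apply/andP; split.
      by rewrite (inj_eq pinj); apply/eqP => E; apply: xy.
    apply/eqP => E; move: (X2 x hx); rewrite ex andbT.
    by rewrite -E ey.
  apply: (nC (p x) (p y) hpx hpy hw ex); first by rewrite !pK.
  have := X3 y hy ey; move: (X1' y hy) => /orP [->//|h _].
  by rewrite esym.
Qed.

Lemma rematch u v : u != v ->
  exists q, [/\ invol q, q u = v & forall t, t \notin [:: u; v] -> e t (q t)].
Proof.
move=> uv.
case: (v =P p u) => [vpu|vpu].
  by exists p; split => //; apply: pinvol.
move/eqP: vpu => vpu.
have vu : v != u by rewrite eq_sym.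
have puu : p u != u := pN u.
have pvv : p v != v := pN v.
have pvpu : p v != p u by rewrite (inj_eq pinj) vu.
have pvu : p v != u by rewrite peq.
have puv : p u != v by rewrite eq_sym.
set q1 := swap p u v.
have q1i : invol q1 by apply: swap_inv => //; apply: pinvol.
have q1u : q1 u = v by rewrite /q1 swap_x.
have q1pu : q1 (p u) = p v by rewrite /q1 swap_qx.
have q1pv : q1 (p v) = p u by rewrite /q1 swap_qy.
have q1o : forall t, t \notin [:: u; v; p u; p v] -> q1 t = p t by move=> t h; rewrite /q1 swap_o.
set sp := [:: u; p u; v; p v].
have spP : forall t, (p t \in sp) = (t \in sp).
  move=> t; rewrite !inE !peq !pK.
  by case: (t == u); case: (t == p u); case: (t == v); case: (t == p v).
have sp_o : forall t, t \notin sp -> t \notin [:: u; v; p u; p v].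
  move=> t; rewrite !inE !negb_or => /and4P [-> -> -> ->] //.
case: (boolP (e (p u) (p v))) => hA.
  exists q1; split => // t; rewrite !inE negb_or => /andP [tu tv].
  case: (t =P p u) => [->|tpu]; first by rewrite q1pu.
  case: (t =P p v) => [->|tpv]; first by rewrite q1pv esym.
  rewrite q1o; first exact: pE.
  by rewrite !inE !negb_or tu tv /=; apply/andP; split; apply/eqP.
case: (boolP [exists z, [&& z \notin sp, e (p u) z & e (p z) (p v)]]).
  case/existsP => z /and3P [hz e1 e2].
  move: (hz); rewrite !inE !negb_or => /and4P [zu zpu zv zpv].
  have D : forall a b, a != b -> p a != p b by move=> a b; rewrite (inj_eq pinj).
  have D2 : forall a b, a != p b -> p a != b by move=> a b; rewrite peq.
  have Ds : forall a b : T, a != b -> b != a by move=> a b; rewrite eq_sym.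
  have q1z : q1 z = p z by rewrite q1o // sp_o.
  set q2 := swap q1 (p u) z.
  have q2i : invol q2 by apply: swap_inv => //; rewrite q1pu.
  have q2pu : q2 (p u) = z by rewrite /q2 swap_x.
  have q2z : q2 z = p u by rewrite /q2 swap_y.
  have q2pv : q2 (p v) = p z.
    by rewrite /q2 -q1pu swap_qx ?q1z //; [apply: q1i.2 | rewrite q1pu; apply: Ds].
  have q2pz : q2 (p z) = p v.
    by rewrite /q2 -q1z -q1pu swap_qy // ?q1z ?q1pu ?(D _ _ zu) ?pN ?(D _ _ zv).
  have q2o : forall t, t \notin [:: p u; z; p v; p z] -> q2 t = q1 t.
    by move=> t h; rewrite /q2 swap_o // q1pu q1z.
  have q2u : q2 u = v.
    rewrite q2o ?q1u // !inE !negb_or.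
    by rewrite ![u == _]eq_sym pN zu pvu peq zpu.
  exists q2; split => // t; rewrite !inE negb_or => /andP [tu tv].
  case: (t =P p u) => [->|tpu]; first by rewrite q2pu.
  case: (t =P z) => [->|tz]; first by rewrite q2z esym.
  case: (t =P p v) => [->|tpv]; first by rewrite q2pv esym.
  case: (t =P p z) => [->|tpz]; first by rewrite q2pz.
  rewrite q2o ?q1o; first exact: pE.
  - by rewrite !inE !negb_or tu tv /=; apply/andP; split; apply/eqP.
  - by rewrite !inE !negb_or; apply/and4P; split; apply/eqP.
move=> nB.
case: (boolP [exists z, exists w, [&& z \notin sp, w \notin sp, w \notin [:: z; p z],
         e (p u) z, e (p z) (p w) & e w (p v)]]).
  case/existsP => z /existsP [w /and5P [hz hw hwz e1 /andP [e2 e3]]].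
  move: (hz); rewrite !inE !negb_or => /and4P [zu zpu zv zpv].
  move: (hw); rewrite !inE !negb_or => /and4P [wu wpu wv wpv].
  move: (hwz); rewrite !inE !negb_or => /andP [wz wpz].
  have D : forall a b, a != b -> p a != p b by move=> a b; rewrite (inj_eq pinj).
  have q1z : q1 z = p z by rewrite q1o // sp_o.
  have q1w : q1 w = p w by rewrite q1o // sp_o.
  set q2 := swap q1 (p u) z.
  have q2i : invol q2 by apply: swap_inv => //; rewrite q1pu.
  have q2pu : q2 (p u) = z by rewrite /q2 swap_x.
  have q2z : q2 z = p u by rewrite /q2 swap_y.
  have q2pv : q2 (p v) = p z.
    by rewrite /q2 -q1pu swap_qx ?q1z //; [apply: q1i.2 | rewrite q1pu eq_sym].
  have q2pz : q2 (p z) = p v.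
    by rewrite /q2 -q1z -q1pu swap_qy // ?q1z ?q1pu ?(D _ _ zu) ?pN ?(D _ _ zv).
  have q2o : forall t, t \notin [:: p u; z; p v; p z] -> q2 t = q1 t.
    by move=> t h; rewrite /q2 swap_o // q1pu q1z.
  have q2u : q2 u = v.
    rewrite q2o ?q1u // !inE !negb_or.
    by rewrite ![u == _]eq_sym pN zu pvu peq zpu.
  have q2w : q2 w = p w.
    by rewrite q2o ?q1w // !inE !negb_or wpu wz wpv wpz.
  set q3 := swap q2 (p v) w.
  have q3i : invol q3 by apply: swap_inv => //; rewrite q2pv.
  have q3pv : q3 (p v) = w by rewrite /q3 swap_x.
  have q3w : q3 w = p v by rewrite /q3 swap_y.
  have q3pz : q3 (p z) = p w.
    rewrite /q3 -q2pv swap_qx ?q2w //; first by apply: q2i.2.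
    by rewrite q2pv eq_sym.
  have q3pw : q3 (p w) = p z.
    by rewrite /q3 -q2w -q2pv swap_qy // ?q2w ?q2pv ?(D _ _ wv) ?pN ?(D _ _ wz).
  have q3o : forall t, t \notin [:: p v; w; p z; p w] -> q3 t = q2 t.
    by move=> t h; rewrite /q3 swap_o // q2pv q2w.
  have q3u : q3 u = v.
    rewrite q3o ?q2u // !inE !negb_or.
    by rewrite ![u == _]eq_sym pvu wu peq zpu peq wpu.
  exists q3; split => // t; rewrite !inE negb_or => /andP [tu tv].
  case: (t =P p v) => [->|tpv]; first by rewrite q3pv esym.
  case: (t =P w) => [->|tw]; first by rewrite q3w.
  case: (t =P p z) => [->|tpz]; first by rewrite q3pz.
  case: (t =P p w) => [->|tpw]; first by rewrite q3pw esym.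
  rewrite q3o; last by rewrite !inE !negb_or; apply/and4P; split; apply/eqP.
  case: (t =P p u) => [->|tpu]; first by rewrite q2pu.
  case: (t =P z) => [->|tz]; first by rewrite q2z esym.
  rewrite q2o; last by rewrite !inE !negb_or; apply/and4P; split; apply/eqP.
  rewrite q1o; first exact: pE.
  by rewrite !inE !negb_or tu tv /=; apply/andP; split; apply/eqP.
move=> nC.
exfalso; apply: (noC uv vpu hA).
  move=> z hz e1 e2; move/existsP: nB; apply; exists z; by rewrite hz e1 e2.
move=> z w hz hw hwz e1 e2 e3; move/existsP: nC; apply; exists z; apply/existsP; exists w.
by rewrite hz hw hwz e1 e2 e3.
Qed.

Lemma conn3 (n2 : 1 < n) (S : {set T}) : #|S| < 3 -> connected_on e (~: S).
Proof.
move=> cS x y xS yS.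
set R := [rel a b | [&& e a b, a \in ~: S & b \in ~: S]].
have Rsym : forall a b, R a b -> R b a.
  by move=> a b /= /and3P [h1 h2 h3]; rewrite esym h1 h2 h3.
case: (boolP [exists w, (w \notin S) && (p w \notin S)]).
  case/existsP => w /andP [wS pwS].
  have toW : forall a, a \in ~: S -> connect R a w /\ connect R w a.
    move=> a aS; case: (a =P w) => [->|aw]; first by split; apply: connect0.
    have rpw : R (p w) w by rewrite /= !inE pwS wS esym pE.
    case: (a =P p w) => [->|apw].
      by split; apply: connect1 => //; exact: Rsym.
    have hw : w \notin [:: a; p a].
      rewrite !inE negb_or; apply/andP; split; first by rewrite eq_sym; apply/eqP.
      by rewrite -peq; apply/eqP => E; apply: apw; rewrite -E.
    case/orP: (nb hw) => h.
      have r : R a w by rewrite /= h aS !inE wS.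
      by split; apply: connect1 => //; exact: Rsym.
    have r : R a (p w) by rewrite /= h aS !inE pwS.
    split; [apply: (@connect_trans _ _ (p w)); apply: connect1 | apply: (@connect_trans _ _ (p w)); apply: connect1]; first [exact: r | exact: rpw | exact: (Rsym _ _ r) | exact: (Rsym _ _ rpw)].
  exact: connect_trans (toW x xS).1 (toW y yS).2.
rewrite negb_exists => /forallP nw.
have sub : [set: T] \subset S :|: p @: S.
  apply/subsetP => t _; rewrite inE imset_p.
  by move: (nw t); rewrite negb_and !negbK.
have h1 := subset_leq_card sub; rewrite cardsT in h1.
have h2 := cardsU S (p @: S); rewrite (card_imset S pinj) in h2.
have n2' : n = 2 by lia.
case: (x =P y) => [->|xy]; first exact: connect0.
apply: connect1; rewrite /= xS yS andbT andbC /=.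
apply: contraT => nexy; exfalso; apply: (noind (S := [set x; y])).
  apply/forallP => a; apply/implyP; rewrite !inE => ha.
  apply/forallP => b; apply/implyP; rewrite !inE => hb.
  case/orP: ha => /eqP ->; case/orP: hb => /eqP ->; rewrite ?eirr //.
  by rewrite esym.
by rewrite cards2 n2'; move/eqP: xy => ->.
Qed.

End NI.

Lemma core : (in_Kplus e n <-> exists S : {set T}, independent e S /\ #|S| = n) /\
  (~ in_Kplus e n -> brick e /\ one_extendable e).
Proof.
have P1 : in_Kplus e n <-> exists S : {set T}, independent e S /\ #|S| = n.
  split.
    case=> A [cA cCA hAB hB]; exists (~: A); split => //.
    apply/forallP => x; apply/implyP => xA; apply/forallP => y; apply/implyP => yA.
    exact: hB.
  by case=> S [iS cS]; apply: (Kplus_of_indep iS cS).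
split => // nK.
have noind : forall S : {set T}, independent e S -> #|S| = n -> False.
  by move=> S iS cS; apply: nK; apply: (Kplus_of_indep iS cS).
have ex : forall m, 0 < m -> m = n -> exists x : T, True.
  move=> m m0 mn; have : 0 < #|T| by rewrite cT -mn; lia.
  by case/card_gt0P => x _; exists x.
have n2 : 1 < n.
  case: n noind cT ex => [|[|m]] noind' cT' ex' //.
    exfalso; apply: (noind' set0); last by rewrite cards0.
    by apply/forallP => x; rewrite inE.
  have [x _] := ex' 1 isT erefl.
  exfalso; apply: (noind' [set x]); last by rewrite cards1.
  apply/forallP => a; apply/implyP; rewrite inE => /eqP ->.
  apply/forallP => b; apply/implyP; rewrite inE => /eqP ->; by rewrite eirr.
have [x0 _] := ex n (ltnW n2) erefl.
have conn := conn3 noind n2.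
have qX : forall (q : T -> T) u v, invol q -> q u = v ->
    forall t, t \in ~: [set u; v] -> q t \in ~: [set u; v].
  move=> q u v [qK qN] qu t; rewrite !inE !negb_or => /andP [tu tv].
  apply/andP; split; apply/eqP => E.
    by move/eqP: tv; apply; rewrite -(qK t) E qu.
  by move/eqP: tu; apply; rewrite -(qK t) E -qu qK.
split; [split; [split|split]|split].
- by rewrite cT; lia.
- exact: conn.
- by exists x0, (p x0).
- move=> u v uv; have [q [qi qu qE]] := rematch noind uv.
  exists [set [set t; q t] | t in ~: [set u; v]].
  apply: matching_from_inv => //; first exact: qX.
  by move=> t ht; apply: qE; move: ht; rewrite !inE.
- by have := conn set0; rewrite cards0 setC0; apply.
- by rewrite cT; lia.
- exists [set [set t; p t] | t in [set: T]].
  by apply: matching_from_inv => // ; apply: pinvol.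
- move=> E /existsP [x /existsP [y /andP [exy /eqP ->]]].
  have xy : x != y by apply/eqP => E'; rewrite E' eirr in exy.
  have [q [[qK qN] qx qE]] := rematch noind xy.
  exists [set [set t; q t] | t in [set: T]]; split.
    apply: matching_from_inv => // t _.
    case: (t =P x) => [->|tx]; first by rewrite qx.
    have qy : q y = x by rewrite -qx qK.
    case: (t =P y) => [->|ty]; first by rewrite qy esym.
    by apply: qE; rewrite !inE negb_or; apply/andP; split; apply/eqP.
  by rewrite -qx; apply: imset_f; rewrite inE.
Qed.
End G.
Unset Implicit Arguments.

Theorem lemma2p5 (T : finType) (e : rel T) (n : nat) :
  simple_graph e ->
  #|T| = (2 * n)%N ->
  has_perfect_matching e ->
  max_forcing_number e = (n - 1)%N ->
  (in_Kplus e n <-> exists S : {set T}, independent e S /\ #|S| = n) /\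
  (~ in_Kplus e n -> brick e /\ one_extendable e).
Proof.
move=> [esym eirr] cT [M0 pm0] mfn.
have gt0 : 0 < #|perfect_matching e| by apply/card_gt0P; exists M0.
have [M pm Emax] := eq_bigmax_cond (forcing_number e) gt0.
have fn : forcing_number e M = n - 1 by rewrite -mfn -Emax.
have [pK pN] := pp_inv eirr pm.
have pE := fun x => pp_edge esym eirr x pm.
have pair := pair_prop esym eirr pm cT (eq_leq (Logic.eq_sym fn)).
exact: (core esym eirr pK pN pE pair cT).
Qed.
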